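(* Let $T$ be a balanced tree of height 3. Suppose that (1) for all $u\in V_2$, $|N(u)\cap V_1|=1$, and (2) for all $s\in V_1$, $|N(s)\cap V_2|\le 1$. Then $T$ is unmixed.
   Context: $N(v)=\{u:uv\in E\}$, $N(D)=\bigcup_{v\in D}N(v)$. A leaf is a vertex of degree 1; the height of a vertex is its minimum distance to a leaf; $V_k$ is the set of vertices of height $k$; the height of $T$ is the maximum height of a vertex; $T$ is balanced if no two adjacent vertices have the same height. A TD-set is $D$ with $N(D)=V$, minimal if no proper subset is a TD-set; $T$ is unmixed if all minimal TD-sets have the same size. *)

(* Defs.v *)
From mathcomp Require Import all_boot.
Set Implicit Arguments. Unset Strict Implicit. Unset Printing Implicit Defensive.

Section Graphs.
Variables (T : finType) (e : rel T).

Definition simple_graph : Prop := symmetric e /\ irreflexive e.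

Definition nbhd (v : T) : {set T} := [set u | e v u].
Definition nbhdS (D : {set T}) : {set T} := \bigcup_(v in D) nbhd v.

Definition acyclic : Prop :=
  forall s : seq T, uniq s -> 3 <= size s -> ~~ cycle e s.

Definition connected : Prop := forall x y : T, connect e x y.

Definition is_tree : Prop := simple_graph /\ connected /\ acyclic.

Definition leaf (v : T) : bool := #|nbhd v| == 1.

Fixpoint walkb (k : nat) (x y : T) : bool :=
  if k is k'.+1 then [exists z, e x z && walkb k' z y] else x == y.

Definition reach_leaf (k : nat) (v : T) : bool :=
  [exists y, leaf y && walkb k v y].

(* v has height k: the minimum distance from v to a leaf is k
   (the minimum walk length equals the minimum path length = distance) *)
Definition has_height (k : nat) (v : T) : bool :=
  reach_leaf k v && [forall j : 'I_k, ~~ reach_leaf j v].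

Definition Vh (k : nat) : {set T} := [set v | has_height k v].

Definition tree_height (h : nat) : Prop :=
  (exists v, has_height h v) /\ (forall v k, has_height k v -> k <= h).

Definition balanced : Prop :=
  forall u v k, e u v -> has_height k u -> ~~ has_height k v.

Definition TDset (D : {set T}) : bool := nbhdS D == [set: T].

Definition minimal_TDset (D : {set T}) : bool :=
  TDset D && [forall D' : {set T}, (D' \proper D) ==> ~~ TDset D'].

Definition unmixed : Prop :=
  forall D1 D2 : {set T}, minimal_TDset D1 -> minimal_TDset D2 -> #|D1| = #|D2|.

End Graphs.

(* Main.v *)
Require Import Defs.
From mathcomp Require Import all_boot.
Set Implicit Arguments. Unset Strict Implicit. Unset Printing Implicit Defensive.

Section Aux.
Variables (T : finType) (e : rel T).
Hypothesis esym : symmetric e.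

Lemma reach_step x y k : e x y -> reach_leaf e k y -> reach_leaf e k.+1 x.
Proof.
move=> exy /existsP [z /andP [lz wz]]; apply/existsP; exists z.
rewrite lz /=; apply/existsP; exists y; by rewrite exy.
Qed.

Lemma hh_uniq v a b : has_height e a v -> has_height e b v -> a = b.
Proof.
wlog: a b / a <= b => [H|leab].
  by case: (leqP a b) => [/H H1 ha hb|/ltnW /H H1 ha hb]; [apply: H1|symmetry; apply: H1].
move=> /andP [ra _] /andP [_ /forallP fb].
case: (ltngtP a b) leab => // ltab _.
by have := fb (Ordinal ltab); rewrite ra.
Qed.

Lemma hh_lip x y a b : e x y -> has_height e a x -> has_height e b y -> b <= a.+1.
Proof.
move=> exy /andP [ra _] /andP [_ /forallP fb].
rewrite leqNgt; apply/negP => lt.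
have := fb (Ordinal lt); rewrite /= (@reach_step y x) //.
by rewrite esym.
Qed.

Lemma leaf_nb y a b : leaf e y -> e y a -> e y b -> a = b.
Proof.
move=> /cards1P [c Hc] ha hb.
have : a \in nbhd e y by rewrite inE.
have : b \in nbhd e y by rewrite inE.
by rewrite Hc !inE => /eqP -> /eqP ->.
Qed.

Lemma hh0 v : has_height e 0 v = leaf e v.
Proof.
rewrite /has_height /reach_leaf.
apply/idP/idP.
  by move=> /andP [/existsP [y /andP [ly /eqP ->]] _].
move=> lv; apply/andP; split; last by apply/forallP => -[].
by apply/existsP; exists v; rewrite lv /=.
Qed.

Lemma walk_path p x : path e x p -> walkb e (size p) x (last x p).
Proof.
elim: p x => [|a p IH] x /=; first by [].
move=> /andP [exa pa]; apply/existsP; exists a; by rewrite exa IH.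
Qed.

Lemma hh_exists v y : connected e -> leaf e y -> exists k, has_height e k v.
Proof.
move=> con ly.
have exP : exists n, reach_leaf e n v.
  case/connectP: (con v y) => p pp yeq.
  exists (size p); apply/existsP; exists y.
  by rewrite ly /= yeq walk_path.
case: (ex_minnP exP) => m rm minm.
exists m; rewrite /has_height rm /=; apply/forallP => j; apply/negP => rj.
by have := minm _ rj; rewrite leqNgt ltn_ord.
Qed.

Lemma hh_bound : tree_height e 3 -> connected e -> forall v, exists2 k, k <= 3 & has_height e k v.
Proof.
move=> [[v0 /andP [/existsP [y /andP [ly _]] _]] hb] con v.
case: (hh_exists v con ly) => k hk; exists k => //; exact: hb hk.
Qed.

Lemma private_nb D x : minimal_TDset e D -> x \in D ->
  exists z, e x z /\ forall v, v \in D -> e v z -> v = x.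
Proof.
move=> /andP [td /forallP mn] xD.
have pr : D :\ x \proper D by rewrite properD1.
have := mn (D :\ x); rewrite pr /= /TDset => /negP ntd.
have [z nz] : exists z, z \notin nbhdS e (D :\ x).
  apply/existsP; rewrite -negb_forall; apply/negP => /forallP H; apply: ntd.
  by apply/eqP/setP => z; rewrite inE H.
move: td; rewrite /TDset => /eqP td.
have : z \in nbhdS e D by rewrite td inE.
case/bigcupP => v vD; rewrite inE => evz.
have vx : v = x.
  case: (eqVneq v x) => // nvx; exfalso; move/negP: nz; apply; apply/bigcupP; exists v.
    by rewrite !inE nvx.
  by rewrite inE.
subst v; exists z; split => // w wD ewz.
case: (eqVneq w x) => // nwx; exfalso; move/negP: nz; apply; apply/bigcupP; exists w.
  by rewrite !inE nwx.
by rewrite inE.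
Qed.

Lemma td_nb D z : minimal_TDset e D -> exists2 v, v \in D & e v z.
Proof.
move=> /andP [/eqP td _].
have : z \in nbhdS e D by rewrite td inE.
by case/bigcupP => v vD; rewrite inE => evz; exists v.
Qed.

Hypothesis bal : balanced e.
Hypothesis hb : forall v, exists2 k, k <= 3 & has_height e k v.
Hypothesis H1 : forall u, u \in Vh e 2 -> #|nbhd e u :&: Vh e 1| = 1.
Hypothesis H2 : forall s, s \in Vh e 1 -> #|nbhd e s :&: Vh e 2| <= 1.

Lemma leaf_sup x s : leaf e x -> e x s -> has_height e 1 s.
Proof.
move=> lx exs; rewrite /has_height; apply/andP; split.
  apply: (@reach_step s x 0); first by rewrite esym.
  by have := hh0 x; rewrite lx /has_height => /andP [].
apply/forallP => -[[|//] ?] /=; apply/negP => r0.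
have h0 : has_height e 0 s by rewrite /has_height r0; apply/forallP => -[].
have := @bal x s 0 exs; rewrite (hh0 x) lx h0; by move=> /(_ isT).
Qed.

Lemma V1_in D s : minimal_TDset e D -> s \in Vh e 1 -> s \in D.
Proof.
move=> mD; rewrite inE => /andP [/existsP [y /andP [ly /existsP [z /andP [esz /eqP zy]]]] _].
subst z.
case: (td_nb y mD) => v vD evy.
by rewrite -(leaf_nb ly (_ : e y v) (_ : e y s)) // esym.
Qed.

Lemma nb1 x : (has_height e 0 x || has_height e 2 x) -> #|nbhd e x :&: Vh e 1| = 1.
Proof.
case/orP => [|h2]; last by apply: H1; rewrite inE.
rewrite hh0 => lx; move/cards1P: (lx) => [c Hc].
have : c \in nbhd e x by rewrite Hc inE.
rewrite inE => exc.
rewrite Hc (setIidPl _) ?cards1 //.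
by apply/subsetP => y; rewrite inE => /eqP ->; rewrite inE (leaf_sup lx exc).
Qed.

Definition f1 x := odflt x [pick s in nbhd e x :&: Vh e 1].

Lemma f1P x : #|nbhd e x :&: Vh e 1| = 1 -> forall s, (e x s && (s \in Vh e 1)) = (s == f1 x).
Proof.
move/eqP/cards1P => [c Hc] s.
have -> : e x s && (s \in Vh e 1) = (s \in nbhd e x :&: Vh e 1) by rewrite !inE.
rewrite Hc inE /f1; case: pickP => [y|H]; last by have := H c; rewrite Hc inE eqxx.
by rewrite Hc inE => /eqP ->.
Qed.

Lemma no3 D w : minimal_TDset e D -> w \in D -> ~~ has_height e 3 w.
Proof.
move=> mD wD; apply/negP => h3.
case: (private_nb mD wD) => z [ewz pz].
case: (hb z) => k k3 hk.
have := hh_lip ewz h3 hk; have := hh_lip (_ : e z w) hk h3.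
rewrite esym => /(_ ewz) k2 _.
have kn3 : k != 3 by apply/eqP => k3'; subst k; have := bal ewz h3; rewrite hk.
have : k = 2 by move: k2 k3 kn3; clear; case: k => [|[|[|[|]]]].
move=> ?; subst k.
have := H1 (_ : z \in Vh e 2); rewrite inE => /(_ hk) /eqP/cards1P [s Hs].
have : s \in nbhd e z :&: Vh e 1 by rewrite Hs inE.
rewrite !inE => /andP [ezs hs1].
have sw := pz s (V1_in mD (_ : s \in Vh e 1)); rewrite inE in sw.
have := sw hs1; rewrite esym => /(_ ezs) sw'; subst s.
by have := hh_uniq hs1 h3.
Qed.

Lemma cardD D : minimal_TDset e D -> #|D| = 2 * #|Vh e 1|.
Proof.
move=> mD.
set D' := D :\: Vh e 1.
have hD' : forall x, x \in D' -> has_height e 0 x || has_height e 2 x.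
  move=> x; rewrite !inE => /andP [nx1 xD].
  have n3 := no3 mD xD.
  case: (hb x) => k k3 hk.
  case: k k3 hk => [|[|[|[|k]]]] // _ hk.
  - by rewrite hk.
  - by rewrite hk in nx1.
  - by rewrite hk orbT.
  - by rewrite hk in n3.
have inj : {in D' &, injective f1}.
  move=> x x' xD' x'D' fx.
  have Px := f1P (nb1 (hD' _ xD')). have Px' := f1P (nb1 (hD' _ x'D')).
  have /andP [exs s1] : e x (f1 x) && (f1 x \in Vh e 1) by rewrite Px.
  have /andP [ex's _] : e x' (f1 x) && (f1 x \in Vh e 1) by rewrite Px' fx.
  have xD : x \in D by move: xD'; rewrite inE => /andP [].
  have x'D : x' \in D by move: x'D'; rewrite inE => /andP [].
  case/orP: (hD' _ xD') => [lx|h2x].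
    rewrite hh0 in lx. case: (private_nb mD xD) => z [exz pz].
    have zs := leaf_nb lx exz exs. subst z. by symmetry; apply: pz.
  case/orP: (hD' _ x'D') => [lx'|h2x'].
    rewrite hh0 in lx'. case: (private_nb mD x'D) => z [exz pz].
    have zs := leaf_nb lx' exz ex's. subst z. by apply: pz.
  move/card_le1_eqP: (H2 s1); apply; rewrite !inE esym ?exs ?ex's /=; by [].
have img : f1 @: D' = Vh e 1.
  apply/setP => s; apply/imsetP/idP.
    case=> x xD' ->. have := f1P (nb1 (hD' _ xD')) (f1 x); rewrite eqxx => /andP [_ ->] //.
  move=> s1. case: (td_nb s mD) => v vD evs.
  have vD' : v \in D'.
    rewrite inE vD andbT; apply/negP => v1. have := @bal v s 1 evs; move: v1 (s1); rewrite !inE => -> ->.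
    by move=> /(_ isT).
  exists v => //. apply/eqP; rewrite -f1P ?evs ?s1 //; exact: nb1 (hD' _ vD').
have cD' : #|D'| = #|Vh e 1| by rewrite -img card_in_imset.
rewrite -(cardsID (Vh e 1) D) (setIidPr _) -/D' ?cD' ?addnn ?mul2n //.
by apply/subsetP => s; apply: V1_in.
Qed.
End Aux.

Theorem theorem3p36 (T : finType) (e : rel T) :
  is_tree e -> balanced e -> tree_height e 3 ->
  (forall u, u \in Vh e 2 -> #|nbhd e u :&: Vh e 1| = 1) ->
  (forall s, s \in Vh e 1 -> #|nbhd e s :&: Vh e 2| <= 1) ->
  unmixed e.
Proof.
move=> [[esym _] [con _]] bal th H1 H2 D1 D2 m1 m2.
have hb := hh_bound th con.
by rewrite (cardD esym bal hb H1 H2 m1) (cardD esym bal hb H1 H2 m2).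
Qed.
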